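(* Consider the network and Algorithm 1 described in the context, with parameter $\Delta_{est}\ge\Delta$, and assume $\delta\le\frac17$. Let $0<\epsilon<1$, let $v\to u$ be a link, and let $\sigma$ be a sequence of $\frac{8\max(2S,3\Delta_{est})}{\rho}\ln\!\left(\frac{N^2}{\epsilon}\right)$ frame-pairs that is admissible with respect to $v\to u$. Then the probability that $\sigma$ does not cover $v\to u$ is at most $\frac{\epsilon}{N^2}$.
   Context: Network: a finite set of $N$ nodes; each node $u$ has a nonempty available channel set $A_u$; $S=\max_u |A_u|$. Neighborhood on a channel is symmetric; all channels have identical propagation characteristics, so $u,v$ are neighbors on $c$ iff they are neighbors on some channel and $c\in A_u\cap A_v$. $\deg(u,c)$ is the number of neighbors of $u$ on $c$, $\Delta=\max_u\max_{c\in A_u}\deg(u,c)$. For neighbors $v,u$ the link $v\to u$ has span $\mathrm{span}(v\to u)=A_u\cap A_v$ and span-ratio $|\mathrm{span}(v\to u)|/|A_u|$; $\rho$ is the minimum span-ratio over all links. A node operates on one channel at a time, cannot transmit and receive simultaneously; a node listening on $c$ throughout a real-time interval $I$ receives a message transmitted on $c$ during $I$ by a neighbor $v$ provided no other neighbor on $c$ transmits on $c$ during $I$; no collision detection. Clocks: each node $u$ has a clock $C_u$ with $(1-\delta)\Delta t\le C_u(t+\Delta t)-C_u(t)\le(1+\delta)\Delta t$ for all real $t$, $\Delta t\ge0$; arbitrary offsets. Algorithm 1 (input: positive integer $\Delta_{est}$, upper bound on $\Delta$ known to all nodes): each node starts at an arbitrary real time and partitions local time into consecutive frames of local length $L$,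 each split into three slots of local length $L/3$. At the start of each frame, node $u$ picks $c$ uniformly at random from $A_u$, and with probability $p_u=\min(\frac12,\frac{|A_u|}{3\Delta_{est}})$ transmits on $c$ during each of the three slots a message with its identity and $A_u$; otherwise it listens on $c$ during the entire frame, recording each sender $v$ (with set $A$) as a neighbor with common channels $A\cap A_u$. Random choices are independent across frames and nodes. Definitions: for a frame $f$, $\mathrm{node}(f)$ is the node owning it. A pair $(f,g)$ is aligned if some slot of $f$ lies completely within $g$ in real time. $\mathrm{overlap}(g,w)$ is the set of frames of $w$ overlapping $g$ in real time, and $\mathrm{overlapAll}(g)$ is the set of all frames (of all nodes) overlapping $g$. $(f,g)$ with $\mathrm{node}(f)=v$, $\mathrm{node}(g)=u$ covers $v\to u$ on $c$ if $v$ transmits on $c$ during $f$, $u$ listens on $c$ during $g$, and no neighbor $w\ne v$ of $u$ on $c$ transmits on $c$ during any frame in $\mathrm{overlap}(g,w)$; it covers $v\to u$ if it does so on some $c\in\mathrm{span}(v\to u)$. $(f,g)$ precedes $(p,q)$ if $\mathrm{node}(f)=\mathrm{node}(p)$, $\mathrm{node}(g)=\mathrm{node}(q)$, $f$ starts before $p$ and $g$ starts before $q$. A sequence $(f_1,g_1),\dots,(f_M,g_M)$ of frame-pairs is admissible with respect to $v\to u$ if $\mathrm{node}(f_k)=v$ and $\mathrm{node}(g_k)=u$ for all $k$, $(f_k,g_k)$ precedes $(f_{k+1},g_{k+1})$ for $k<M$, each $(f_k,g_k)$ is aligned, and $\mathrm{overlapAll}(g_k)\cap\mathrm{overlapAll}(g_{k+1})=\emptyset$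 for $k<M$. A sequence covers $v\to u$ if some frame-pair in it covers $v\to u$. *)

(* Defs.v *)
From HB Require Import structures.
From mathcomp Require Import all_boot all_order all_algebra.
From mathcomp Require Import boolp classical_sets reals exp.
Set Implicit Arguments. Unset Strict Implicit. Unset Printing Implicit Defensive.
Import Order.TTheory GRing.Theory Num.Theory.
Local Open Scope ring_scope.
Local Open Scope classical_set_scope.

Section Network.
Variables (R : realType) (V Ch : finType).
(* [adj]: the (channel-independent) neighbourhood relation given by propagation;
   [A u]: available channel set of node u. *)
Variables (adj : rel V) (A : V -> {set Ch}).

Definition nbr_on (u w : V) (c : Ch) : bool :=
  [&& adj u w, c \in A u & c \in A w].

Definition is_link (v u : V) : bool := [exists c, nbr_on u v c].

Definition span (v u : V) : {set Ch} := A u :&: A v.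

Definition deg (u : V) (c : Ch) : nat := #|[set w | nbr_on u w c]|.

Definition Delta : nat := \max_(u : V) \max_(c in A u) deg u c.

Definition Smax : nat := \max_(u : V) #|A u|.

Definition span_ratio (v u : V) : R := #|span v u|%:R / #|A u|%:R.

(* minimum span-ratio over all links (all span-ratios are <= 1, so the
   neutral element 1 is harmless when a link exists) *)
Definition rho : R :=
  \big[Num.min/1]_(p : V * V | is_link p.1 p.2) span_ratio p.1 p.2.

Definition ptx (Dest : nat) (u : V) : R :=
  Num.min (1 / 2) (#|A u|%:R / (3 * Dest%:R)).

Definition drift_bounded (delta : R) (C : V -> R -> R) : Prop :=
  forall (u : V) (t dt : R), 0 <= dt ->
    (1 - delta) * dt <= C u (t + dt) - C u t <= (1 + delta) * dt.

Variables (C : V -> R -> R) (s : V -> R) (L : R).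
(* node w starts at real time [s w]; its k-th frame (k : nat) is the set of
   real times at which its local time elapsed since the start lies in
   [kL, (k+1)L); slot j (j < 3) of that frame is [kL + jL/3, kL + (j+1)L/3). *)
Definition frameSet (w : V) (k : nat) : set R :=
  [set t | s w <= t /\
     k%:R * L <= C w t - C w (s w) < k.+1%:R * L].

Definition slotSet (w : V) (k j : nat) : set R :=
  [set t | s w <= t /\
     k%:R * L + j%:R * (L / 3) <= C w t - C w (s w)
       < k%:R * L + j.+1%:R * (L / 3)].

Definition overlap (w : V) (k : nat) (u : V) (g : nat) : Prop :=
  frameSet w k `&` frameSet u g !=set0.

Definition aligned (v : V) (f : nat) (u : V) (g : nat) : Prop :=
  exists j : nat, (j < 3)%N /\ slotSet v f j `<=` frameSet u g.

(* admissible sequence (f k, g k)_{k < M} of frame-pairs, f k frames of v,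
   g k frames of u (frames of a node are indexed in temporal order). *)
Definition admissible (v u : V) (M : nat) (f g : nat -> nat) : Prop :=
  [/\ forall k, (k.+1 < M)%N -> (f k < f k.+1)%N /\ (g k < g k.+1)%N,
      forall k, (k < M)%N -> aligned v (f k) u (g k) &
      forall k, (k.+1 < M)%N -> forall (w : V) (j : nat),
        ~ (overlap w j u (g k) /\ overlap w j u (g k.+1))].

(* Random choices of Algorithm 1 for the frames with index < K of all nodes:
   an outcome assigns to every (node, frame) a channel and a bit
   (true = transmit during the frame, false = listen). *)
Variable K : nat.
Definition outcome := {ffun V * 'I_K -> Ch * bool}.

Definition choice_at (om : outcome) (w : V) (k : nat) : option (Ch * bool) :=
  match (insub k : option 'I_K) with
  | Some i => Some (om (w, i))
  | None => None
  end.

Definition transmits (om : outcome) (w : V) (k : nat) (c : Ch) : Prop :=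
  choice_at om w k = Some (c, true).
Definition listens (om : outcome) (w : V) (k : nat) (c : Ch) : Prop :=
  choice_at om w k = Some (c, false).

Definition pchoice (Dest : nat) (w : V) (x : Ch * bool) : R :=
  if x.1 \in A w then
    (#|A w|%:R)^-1 * (if x.2 then ptx Dest w else 1 - ptx Dest w)
  else 0.

Definition weight (Dest : nat) (om : outcome) : R :=
  \prod_(x : V * 'I_K) pchoice Dest x.1 (om x).

Definition Prob (Dest : nat) (E : outcome -> Prop) : R :=
  \sum_(om : outcome | `[< E om >]) weight Dest om.

Definition covers_on (om : outcome) (v : V) (f : nat) (u : V) (g : nat)
    (c : Ch) : Prop :=
  [/\ transmits om v f c, listens om u g c &
      forall (w : V) (j : nat), w != v -> nbr_on u w c ->
        overlap w j u g -> ~ transmits om w j c].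

Definition covers (om : outcome) (v : V) (f : nat) (u : V) (g : nat) : Prop :=
  exists c, c \in span v u /\ covers_on om v f u g c.

Definition seq_covers (om : outcome) (v u : V) (M : nat) (f g : nat -> nat)
    : Prop :=
  exists k, (k < M)%N /\ covers om v (f k) u (g k).

(* the finite window K contains all frames on which coverage of the
   sequence depends *)
Definition window_ok (u : V) (M : nat) (f g : nat -> nat) : Prop :=
  forall k, (k < M)%N ->
    [/\ (f k < K)%N, (g k < K)%N &
        forall (w : V) (j : nat), overlap w j u (g k) -> (j < K)%N].

End Network.

(* Main.v *)
Require Import Defs.
From HB Require Import structures.
From mathcomp Require Import all_boot all_order all_algebra.
From mathcomp Require Import boolp classical_sets reals exp.
From mathcomp Require Import ring lra.
Set Implicit Arguments. Unset Strict Implicit. Unset Printing Implicit Defensive.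
Import Order.TTheory GRing.Theory Num.Theory.
Local Open Scope ring_scope.

Section Gen.
Variables (R : realType) (I J : finType) (p : I -> J -> R).
Definition W (om : {ffun I -> J}) : R := \prod_x p x (om x).
Hypothesis p_ge0 : forall x j, 0 <= p x j.
Hypothesis p_sum1 : forall x, \sum_j p x j = 1.

Lemma W_ge0 om : 0 <= W om.
Proof. by apply: prodr_ge0 => x _. Qed.

Lemma W_sum1 : \sum_om W om = 1.
Proof.
rewrite /W -(bigA_distr_bigA (fun x j => p x j)).
by rewrite big1 // => x _; rewrite p_sum1.
Qed.

Lemma sum_W_prodB (B : I -> {set J}) :
  \sum_om W om * \prod_x (om x \in B x)%:R = \prod_x \sum_(j in B x) p x j.
Proof.
transitivity (\sum_(om : {ffun I -> J}) \prod_x (p x (om x) * (om x \in B x)%:R)).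
  by apply: eq_bigr => om _; rewrite /W -big_split.
rewrite -(bigA_distr_bigA (fun x j => p x j * (j \in B x)%:R)); apply: eq_bigr => x _.
rewrite [RHS]big_mkcond /=; apply: eq_bigr => j _.
by case: (j \in B x); rewrite ?mulr1 ?mulr0.
Qed.

Definition dep (S : {set I}) (phi : {ffun I -> J} -> R) :=
  forall a b : {ffun I -> J}, (forall x, x \in S -> a x = b x) -> phi a = phi b.
Definition mrg (S : {set I}) (a b : {ffun I -> J}) : {ffun I -> J} :=
  [ffun x => if x \in S then a x else b x].

Lemma indep S phi psi : dep S phi -> dep (~: S) psi ->
  \sum_om W om * (phi om * psi om) =
  (\sum_om W om * phi om) * (\sum_om W om * psi om).
Proof.
move=> dphi dpsi.
set h := fun ab : ({ffun I -> J} * {ffun I -> J})%type => (mrg S ab.1 ab.2, mrg S ab.2 ab.1).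
have hK : involutive h.
  move=> [a b]; rewrite /h /=; congr pair; apply/ffunP => x; rewrite !ffunE;
  by case: (x \in S).
set G := fun cd : ({ffun I -> J} * {ffun I -> J})%type =>
   W cd.1 * (phi cd.1 * psi cd.1) * W cd.2.
symmetry.
rewrite big_distrl /=.
under eq_bigr => a _ do rewrite big_distrr /=.
rewrite pair_bigA /=.
transitivity (\sum_(pr : ({ffun I -> J} * {ffun I -> J})%type) G (h pr)).
  apply: eq_bigr => [[a b]] _ /=; rewrite /G /h /=.
  have e1 : phi (mrg S a b) = phi a.
    by apply: dphi => x xS; rewrite ffunE xS.
  have e2 : psi (mrg S a b) = psi b.
    by apply: dpsi => x; rewrite finset.in_setC => /negbTE xS; rewrite ffunE xS.
  have e3 : W a * W b = W (mrg S a b) * W (mrg S b a).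
    rewrite /W -!big_split; apply: eq_bigr => x _; rewrite !ffunE.
    by case: (x \in S) => //=; rewrite mulrC.
  rewrite e1 e2.
  transitivity (W a * W b * (phi a * psi b)); first by rewrite mulrACA.
  by rewrite e3 mulrAC.
have -> : \sum_(pr : ({ffun I -> J} * {ffun I -> J})%type) G (h pr) =
   \sum_(pr : ({ffun I -> J} * {ffun I -> J})%type) G pr.
  have eqh := @reindex_inj R +%R 0 _ h xpredT G (inv_inj hK).
    rewrite eqh.
    by apply: eq_bigl => pr.
rewrite /G.
rewrite -(pair_bigA _ (fun c d => W c * (phi c * psi c) * W d)) /=.
under eq_bigr => c _ do rewrite -big_distrr /= W_sum1 mulr1.
by [].
Qed.

Lemma indep_prod (S : nat -> {set I}) (phi : nat -> {ffun I -> J} -> R) M :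
  (forall k, (k < M)%N -> dep (S k) (phi k)) ->
  (forall k k' x, (k < k')%N -> (k' < M)%N -> x \in S k -> x \in S k' -> False) ->
  \sum_om W om * \prod_(k < M) phi k om = \prod_(k < M) \sum_om W om * phi k om.
Proof.
elim: M => [|M IH] hdep hdis.
  by rewrite big_ord0; under eq_bigr => om _ do rewrite big_ord0 mulr1; rewrite W_sum1.
rewrite big_ord_recr /= -IH; last 2 first.
- by move=> k kM; apply: hdep; apply: ltnW.
- by move=> k k' x kk' k'M; apply: hdis => //; apply: ltnW.
under eq_bigr => om _ do rewrite big_ord_recr /= [_ * phi M om]mulrC.
rewrite (@indep (S M)); [by rewrite mulrC | exact: hdep | ].
move=> a b hab; apply: eq_bigr => k _; apply: (hdep k (leqW (ltn_ord k))).
move=> x xk; apply: hab; rewrite finset.in_setC; apply/negP => xM.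
by apply: (hdis k M x).
Qed.

Lemma sumC1 x y : \sum_(j in ~: [set y]) p x j = 1 - p x y.
Proof.
rewrite -(p_sum1 x) [in RHS](bigD1 y) //= addrAC subrr add0r.
by apply: eq_bigl => j; rewrite finset.in_setC finset.in_set1.
Qed.

End Gen.

Section Geo.
Variables (R : realType) (V : finType) (delta L : R) (C : V -> R -> R) (s : V -> R).
Hypothesis hdrift : drift_bounded delta C.
Hypothesis hdelta : delta <= 1 / 7.
Hypothesis hL : 0 < L.
Ltac LRA := have ? := hdelta; have ? := hL; lra.
Ltac NRA := have ? := hdelta; have ? := hL; nra.

Lemma natS (k : nat) : k.+1%:R = k%:R + 1 :> R.
Proof. by rewrite -addn1 natrD. Qed.

Lemma delta_ge0 (w : V) : 0 <= delta.
Proof.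
have := hdrift w 0 (@ler01 R) => /andP[h1 h2]; LRA.
Qed.

Lemma drift_le w t1 t2 : t1 <= t2 ->
  (1 - delta) * (t2 - t1) <= C w t2 - C w t1 <= (1 + delta) * (t2 - t1).
Proof.
move=> h; have h' : 0 <= t2 - t1 by rewrite subr_ge0.
by have := hdrift w t1 h'; rewrite (addrC t1) subrK.
Qed.

Lemma Cmono w t1 t2 : t1 <= t2 -> C w t1 <= C w t2.
Proof.
move=> h; have /andP[h1 h2] := drift_le w h.
have d0 := delta_ge0 w.
have : 0 <= (1 - delta) * (t2 - t1) by apply: mulr_ge0; [LRA| rewrite subr_ge0].
LRA.
Qed.

Lemma frames_close w j1 j2 u gg :
  overlap C s L w j1 u gg -> overlap C s L w j2 u gg -> (j2 <= j1 + 2)%N.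
Proof.
move=> [t1 [[sw1 /andP[a1 b1]] [su1 /andP[c1 d1]]]].
move=> [t2 [[sw2 /andP[a2 b2]] [su2 /andP[c2 d2]]]].
rewrite leqNgt; apply/negP => hj.
have hj' : (j1%:R + 3 <= j2%:R :> R).
  by rewrite -natrD ler_nat addnS.
have d0 := delta_ge0 w.
rewrite !natS in b1 b2 d1 d2.
have hjL : (j1%:R + 3) * L <= j2%:R * L by rewrite ler_pM2r.
case: (lerP t1 t2) => ht.
- have /andP[_ dw] := drift_le w ht.
  have /andP[du _] := drift_le u ht.
  have : 0 <= (1/7 - delta) * (t2 - t1) by apply: mulr_ge0; LRA.
  NRA.
- have := Cmono w (ltW ht); NRA.
Qed.

Lemma hit w (a : R) t1 t2 : t1 <= t2 -> C w t1 < a -> a + L <= C w t2 ->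
  exists t, t1 <= t <= t2 /\ a <= C w t < a + L.
Proof.
move=> h12 h1 h2.
have d0 := delta_ge0 w.
set x := (1 + delta) * (t2 - t1) / L.
have x0 : 0 <= x by apply: divr_ge0; [apply: mulr_ge0; LRA| LRA].
set n := Num.bound x.
have xn : x < n%:R := archi_boundP x0.
have n0 : (0 < n)%N by rewrite -(ltr_nat R); apply: le_lt_trans xn.
have n0' : (0 : R) < n%:R by rewrite ltr0n.
set h := (t2 - t1) / n%:R.
have h0 : 0 <= h by apply: divr_ge0; LRA.
have hstep : (1 + delta) * h < L.
  move: xn; rewrite /x ltr_pdivrMr // => xn.
  by rewrite /h mulrA ltr_pdivrMr //; NRA.
pose pt (i : nat) := t1 + i%:R * h.
have ptn : pt n = t2 by rewrite /pt /h mulrC divfK ?subrKC //; LRA.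
pose P (i : nat) := a <= C w (pt i).
have Pn : P n by rewrite /P ptn; LRA.
case: (ex_minnP (ex_intro P n Pn)) => i Pi imin.
case: i Pi imin => [|i] Pi imin.
  by move: Pi; rewrite /P /pt mul0r addr0; LRA.
have nPi : ~~ P i.
  by apply/negP => /imin; rewrite ltnn.
have hin : (i.+1 <= n)%N by apply: imin.
have e : pt i.+1 = pt i + h by rewrite /pt natS mulrDl mul1r addrA.
have hpi : t1 <= pt i by rewrite /pt lerDl; apply: mulr_ge0.
have /andP[_ dw] := drift_le w (ltac:(by rewrite lerDl) : pt i <= pt i + h).
exists (pt i.+1); split.
- apply/andP; split; first by rewrite /pt lerDl; apply: mulr_ge0.
  rewrite -ptn /pt lerD2l ler_wpM2r // ler_nat //.
- apply/andP; split; first by [].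
  move: nPi dw; rewrite /P -ltNge e => nPi dw.
  have : (1 + delta) * h < L by [].
  LRA.
Qed.

Lemma between w j u g1 g2 g3 : (g1 < g2)%N -> (g2 < g3)%N ->
  overlap C s L w j u g1 -> overlap C s L w j u g3 -> overlap C s L w j u g2.
Proof.
move=> h12 h23.
move=> [t1 [[sw1 /andP[a1 b1]] [su1 /andP[c1 d1]]]].
move=> [t3 [[sw3 /andP[a3 b3]] [su3 /andP[c3 d3]]]].
have e12 : g1.+1%:R * L <= g2%:R * L by rewrite ler_pM2r // ler_nat.
have e23 : g2.+1%:R * L <= g3%:R * L by rewrite ler_pM2r // ler_nat.
rewrite !natS in e12 e23 b1 b3 d1 d3.
have ht : t1 <= t3.
  case: (lerP t1 t3) => // ht; have := Cmono u (ltW ht); NRA.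
have [t [/andP[ht1 ht3] /andP[hc1 hc2]]] :=
  @hit u (g2%:R * L + C u (s u)) t1 t3 ht ltac:(NRA) ltac:(NRA).
exists t; split.
- split; first by apply: le_trans ht1.
  have := Cmono w ht1; have := Cmono w ht3; rewrite natS.
  move=> q1 q2; apply/andP; split; LRA.
- split; first by apply: le_trans ht1.
  rewrite natS; apply/andP; split; LRA.
Qed.

End Geo.

Lemma expR1_le4 (R : realType) : sequences.expR (1 : R) <= 4.
Proof.
have e1 : sequences.expR (1 : R) = sequences.expR (1/2) * sequences.expR (1/2).
  by rewrite -expRD; congr sequences.expR; field.
have e2 := expRxMexpNx_1 (1/2 : R).
have e3 := expR_ge1Dx (- (1/2) : R).
have e4 := expR_ge0 (1/2 : R).
set E := sequences.expR (1/2 : R) in e1 e2 e4.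
set e := sequences.expR (- (1/2) : R) in e2 e3.
have hE : E <= 2 by nra.
rewrite e1; nra.
Qed.

Lemma quarter (R : realType) (D : nat) : (0 < D)%N ->
  1/4 <= (1 - 1/(3 * D%:R)) ^+ (3 * (D - 1)) :> R.
Proof.
move=> hD.
have D1 : (1 : R) <= D%:R by rewrite ler1n.
set b : R := 1 - 1/(3 * D%:R).
set m := (3 * D - 1)%N.
have mR : m%:R = 3 * D%:R - 1 :> R.
  rewrite /m natrB ?natrM //; by rewrite muln_gt0.
set y : R := 1 / (3 * D%:R - 1).
have y0 : 0 <= y by rewrite /y; apply: divr_ge0; lra.
have b0 : 0 <= b.
  rewrite /b subr_ge0 ler_pdivrMr; last lra.
  lra.
have b1 : b <= 1.
  rewrite /b lerBlDr lerDl; apply: divr_ge0; lra.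
have hby : b * (1 + y) = 1 by rewrite /b /y; field; lra.
have hmy : m%:R * y = 1 by rewrite mR /y; field; lra.
have hZ : (1 + y) ^+ m <= 4.
  apply: le_trans (expR1_le4 R).
  rewrite -[X in sequences.expR X]hmy expRM_natl.
  apply: lerXn2r; rewrite ?nnegrE ?expR_ge0 //.
    by apply: addr_ge0.
  by apply: expR_ge1Dx.
have hbm : b ^+ m * (1 + y) ^+ m = 1 by rewrite -exprMn hby expr1n.
have hle : b ^+ m <= b ^+ (3 * (D - 1)).
  apply: ler_wiXn2l => //; rewrite /m mulnBr muln1; exact: leq_sub2l.
have h0 : 0 <= b ^+ m by apply: exprn_ge0.
have hZ0 : 0 <= (1 + y) ^+ m.
  by apply: exprn_ge0; apply: addr_ge0.
nra.
Qed.

Section Main.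
Variables (R : realType) (V Ch : finType) (adj : rel V) (A : V -> {set Ch})
  (Dest : nat) (delta L : R) (C : V -> R -> R) (s : V -> R) (v u : V)
  (M K : nat) (f g : nat -> nat).
Hypotheses (hirr : irreflexive adj) (hA : forall w, (0 < #|A w|)%N)
  (hD : (0 < Dest)%N) (hDelta : (Delta adj A <= Dest)%N)
  (hdrift : drift_bounded delta C) (hdelta : delta <= 1 / 7) (hL : 0 < L)
  (hlink : is_link adj A v u)
  (hadm : admissible C s L v u M f g) (hwin : window_ok C s L K u M f g).

Local Notation I := (V * 'I_K)%type.
Local Notation J := (Ch * bool)%type.
Local Notation FF := {ffun I -> J}.

Definition pp (x : I) (j : J) : R := pchoice R A Dest x.1 j.

Lemma aw_pos w : (0 : R) < #|A w|%:R.
Proof. by rewrite ltr0n. Qed.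

Lemma D_pos : (0 : R) < Dest%:R.
Proof. by rewrite ltr0n. Qed.

Lemma ptx_ge0 w : 0 <= ptx R A Dest w.
Proof.
rewrite /ptx le_min; apply/andP; split; first lra.
apply: divr_ge0; [exact: ler0n| apply: mulr_ge0; [lra| exact: ler0n]].
Qed.

Lemma ptx_le w : ptx R A Dest w <= 1 / 2.
Proof. by rewrite /ptx ge_min lexx. Qed.

Lemma ptx_le2 w : ptx R A Dest w <= #|A w|%:R / (3 * Dest%:R).
Proof. by rewrite /ptx ge_min lexx orbT. Qed.

Lemma pp_ge0 x j : 0 <= pp x j.
Proof.
rewrite /pp /pchoice; case: ifP => _ //; apply: mulr_ge0.
  by rewrite invr_ge0.
case: j.2; first exact: ptx_ge0.
have := ptx_le x.1; lra.
Qed.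

Lemma pp_sum1 x : \sum_j pp x j = 1.
Proof.
rewrite -(pair_bigA _ (fun c b => pp x (c, b))) /=.
under eq_bigr => c _ do rewrite big_bool /pp /pchoice /=.
transitivity (\sum_(c in A x.1) (#|A x.1|%:R : R)^-1).
  rewrite [RHS]big_mkcond; apply: eq_bigr => c _; case: ifP => _.
    by rewrite -mulrDr addrC subrK mulr1.
  by rewrite addr0.
rewrite sumr_const -[_ *+ _]mulr_natr mulVf //.
by have := aw_pos x.1; rewrite lt0r => /andP[].
Qed.

Lemma Prob_eq (E : FF -> Prop) :
  Prob R A Dest E = \sum_om W pp om * (`[< E om >])%:R.
Proof.
rewrite /Prob big_mkcond; apply: eq_bigr => om _.
by case: asboolP => _; rewrite ?mulr1 ?mulr0.
Qed.

Lemma vu_neq : v != u.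
Proof.
apply/eqP => e; move: hlink; rewrite /is_link e => /existsP[c].
by rewrite /nbr_on hirr.
Qed.

Lemma adj_uv : adj u v.
Proof. by move: hlink => /existsP[c] /and3P[]. Qed.

Lemma fg_mono k k' : (k < k')%N -> (k' < M)%N -> (f k < f k')%N /\ (g k < g k')%N.
Proof.
case: hadm => hinc _ _.
elim: k' => // k' IH; rewrite ltnS leq_eqVlt => /orP[/eqP <-|hk] hM.
  exact: hinc.
have [a b] := IH hk (ltnW hM); have [c d] := hinc k' hM.
by split; [apply: ltn_trans c | apply: ltn_trans d].
Qed.

Lemma nonoverlap k k' w j : (k < k')%N -> (k' < M)%N ->
  overlap C s L w j u (g k) -> overlap C s L w j u (g k') -> False.
Proof.
case: hadm => hinc _ hdis => hk hM o1 o2.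
have hk1 : (k.+1 < M)%N by apply: leq_ltn_trans hM.
case: (ltngtP k.+1 k') => [hlt|hgt|heq].
- have o3 : overlap C s L w j u (g k.+1).
    have [_ a] := hinc k hk1.
    have [_ b] := fg_mono hlt hM.
    exact: (between hdrift hdelta hL a b o1 o2).
  exact: (hdis k hk1 w j).
- by rewrite ltnS leqNgt hk in hgt.
- by apply: (hdis k hk1 w j); rewrite heq.
Qed.

Definition Sk (k : nat) : {set I} :=
  [set x : I | ((x.1 == v) && (val x.2 == f k)) || ((x.1 == u) && (val x.2 == g k))
     || [&& x.1 != v, adj u x.1 & `[< overlap C s L x.1 x.2 u (g k) >]]].

Definition phik (k : nat) (om : FF) : R :=
  (~~ `[< covers adj A C s L om v (f k) u (g k) >])%:R.

Lemma choice_eq (a b : FF) w j :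
  (forall i : 'I_K, val i = j -> a (w, i) = b (w, i)) ->
  choice_at a w j = choice_at b w j.
Proof. by rewrite /choice_at; case: insubP => [i _ hi|] // H; rewrite H. Qed.

Lemma covers_dep k (a b : FF) : (forall x, x \in Sk k -> a x = b x) ->
  covers adj A C s L a v (f k) u (g k) -> covers adj A C s L b v (f k) u (g k).
Proof.
move=> hab [c [hc [ht hl hw]]]; exists c; split => //; split.
- rewrite /transmits -ht; symmetry; apply: choice_eq => i hi; apply: hab.
  by rewrite inE /= eqxx hi eqxx.
- rewrite /listens -hl; symmetry; apply: choice_eq => i hi; apply: hab.
  by rewrite inE /= eqxx hi eqxx orbT.
- move=> w j hwv hn ho; rewrite /transmits.
  have -> : choice_at b w j = choice_at a w j.
    symmetry; apply: choice_eq => i hi; apply: hab.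
    rewrite inE /= hwv /=; move: hn => /and3P[-> _ _] /=.
    by apply/orP; right; apply/asboolP; rewrite hi.
  exact: hw.
Qed.

Lemma phik_dep k : dep (Sk k) (phik k).
Proof.
move=> a b hab; rewrite /phik.
case: asboolP => ha; case: asboolP => hb //; exfalso.
- by apply: hb; apply: covers_dep ha.
- by apply: ha; apply: (covers_dep (a := b)) hb => x /hab.
Qed.

Lemma Sk_dis k k' x : (k < k')%N -> (k' < M)%N -> x \in Sk k -> x \in Sk k' -> False.
Proof.
move=> hk hM; have [fm gm] := fg_mono hk hM.
have vu := vu_neq.
case: x => w i; rewrite !inE /=.
case/orP => [/orP[/andP[/eqP e1 /eqP e2]|/andP[/eqP e1 /eqP e2]]|/and3P[h1 h2 /asboolP h3]];
case/orP => [/orP[/andP[/eqP e1' /eqP e2']|/andP[/eqP e1' /eqP e2']]|/and3P[h1' h2' /asboolP h3']];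
idtac.
- by move: fm; rewrite -e2 -e2' ltnn.
- by rewrite -e1 e1' eqxx in vu.
- by rewrite e1 eqxx in h1'.
- by rewrite -e1' e1 eqxx in vu.
- by move: gm; rewrite -e2 -e2' ltnn.
- by rewrite e1 hirr in h2'.
- by rewrite e1' eqxx in h1.
- by rewrite e1' hirr in h2.
- exact: (nonoverlap hk hM h3 h3').
Qed.


Lemma edeg w c :
  deg adj A w c = #|finset.finset (fun w' => nbr_on adj A w w' c)|.
Proof.
rewrite /deg; apply: eq_card => w'; rewrite finset.in_set.
by rewrite /in_mem /= /classical_sets.in_set asboolb.
Qed.

Lemma prod_ind (P : pred I) : \prod_x (P x)%:R = ([forall x, P x])%:R :> R.
Proof.
case: (boolP [forall x, P x]) => [/forallP h|].
  by rewrite big1 // => x _; rewrite h.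
rewrite negb_forall => /existsP [x hx].
by rewrite (bigD1 x) //= (negbTE hx) mul0r.
Qed.

Lemma card3 (S : {set 'I_K}) :
  (forall i j, i \in S -> j \in S -> (j <= i + 2)%N) -> (#|S| <= 3)%N.
Proof.
move=> H; case: (set_0Vmem S) => [->|[i0 hi0]]; first by rewrite cards0.
case: (@arg_minnP _ i0 (fun j => j \in S) (fun i => val i) hi0) => m hm hmin.
pose h := fun j : 'I_K => (inord (val j - val m) : 'I_3).
rewrite -(card_in_imset (f := h)); first by apply: leq_trans (max_card _) _; rewrite card_ord.
move=> a b ha hb /(congr1 (@nat_of_ord 3)); rewrite /h /= !inordK.
- move=> e; apply: val_inj.
  by rewrite -(subnK (hmin a ha)) -(subnK (hmin b hb)) e.
- by rewrite ltnS leq_subLR; apply: H.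
- by rewrite ltnS leq_subLR; apply: H.
Qed.

Lemma rho_le : rho R adj A <= span_ratio R A v u.
Proof. by rewrite /rho (bigD1 (v, u)) //= ge_min lexx. Qed.

Lemma rho_pos : 0 < rho R adj A.
Proof.
apply: (big_ind (fun x => 0 < x)) => //.
  by move=> x y hx hy; rewrite lt_min hx hy.
move=> [p1 p2] /= /existsP [c /and3P[h1 h2 h3]].
apply: divr_gt0; last exact: aw_pos.
rewrite ltr0n; apply/card_gt0P; exists c.
by rewrite /Defs.span finset.in_setI h2 h3.
Qed.

Section Pair.
Variables (k : nat) (hkM : (k < M)%N).
Let hF : (f k < K)%N. Proof. by case: (hwin hkM). Qed.
Let hG : (g k < K)%N. Proof. by case: (hwin hkM). Qed.
Local Notation x0 := (v, Ordinal hF).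
Local Notation x1 := (u, Ordinal hG).

Definition Ic (c : Ch) : {set I} :=
  [set x : I | [&& x.1 != v, nbr_on adj A u x.1 c & `[< overlap C s L x.1 x.2 u (g k) >]]].

Definition Bc (c : Ch) (x : I) : {set J} :=
  if x == x0 then [set (c, true)] else if x == x1 then [set (c, false)]
  else if x \in Ic c then ~: [set (c, true)] else finset.setT.

Lemma x10 : (x1 != x0).
Proof. by apply/eqP => [[e _]]; move: vu_neq; rewrite e eqxx. Qed.

Lemma choice_val (om : FF) w (i : 'I_K) : choice_at om w i = Some (om (w, i)).
Proof. by rewrite /choice_at valK. Qed.

Lemma Bc_covers c (om : FF) : c \in Defs.span A v u -> (forall x, om x \in Bc c x) ->
  covers_on adj A C s L om v (f k) u (g k) c.
Proof.
move=> hc H; split.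
- have := H x0; rewrite /Bc eqxx finset.in_set1 => /eqP e.
  by rewrite /transmits (choice_val om v (Ordinal hF)) e.
- have := H x1; rewrite /Bc (negbTE x10) eqxx finset.in_set1 => /eqP e.
  by rewrite /listens (choice_val om u (Ordinal hG)) e.
- move=> w j hwv hn ho; rewrite /transmits /choice_at; case: insubP => [i _ hi|] //.
  case=> e.
  have hI : (w, i) \in Ic c.
    by rewrite inE /= hwv hn /=; apply/asboolP; rewrite hi.
  have h0 : (w, i) != x0 by apply/eqP => [[e' _]]; rewrite e' eqxx in hwv.
  have h1 : (w, i) != x1 by apply/eqP => [[e' _]]; move: hn; rewrite e' /nbr_on hirr.
  have := H (w, i); rewrite /Bc (negbTE h0) (negbTE h1) hI e.
  by rewrite finset.in_setC finset.in_set1 eqxx.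
Qed.

Lemma ind_le (om : FF) :
  \sum_(c in Defs.span A v u) \prod_x (om x \in Bc c x)%:R <=
  (`[< covers adj A C s L om v (f k) u (g k) >])%:R :> R.
Proof.
under eq_bigr => c _ do rewrite (prod_ind (fun x => om x \in Bc c x)).
case: asboolP => hc.
- apply: le_trans (_ : \sum_(c in Defs.span A v u) ((om x0).1 == c)%:R <= (1 : R)).
    apply: ler_sum => c _; case: forallP => h //.
    by have := h x0; rewrite /Bc eqxx finset.in_set1 => /eqP -> /=; rewrite eqxx.
  apply: le_trans (_ : \sum_c ((om x0).1 == c)%:R <= (1 : R)).
    rewrite [X in X <= _]big_mkcond /=; apply: ler_sum => c _.
    by case: (c \in _).
  rewrite (bigD1 (om x0).1) //= eqxx big1 ?addr0 // => c.
  by rewrite eq_sym => /negbTE ->.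
- rewrite big1 // => c hc'; case: forallP => // h; exfalso; apply: hc.
  by exists c; split => //; apply: Bc_covers.
Qed.

Lemma Ic_card c : c \in Defs.span A v u -> (#|Ic c| <= 3 * (Dest - 1))%N.
Proof.
move=> hc.
have hcu : c \in A u by move: hc; rewrite /Defs.span finset.in_setI => /andP[].
have hcv : c \in A v by move: hc; rewrite /Defs.span finset.in_setI => /andP[].
rewrite -sum1_card.
rewrite (eq_bigl (fun x : I => ((x.1 != v) && nbr_on adj A u x.1 c) &&
   `[< overlap C s L x.1 x.2 u (g k) >])); last by move=> x; rewrite inE andbA.
rewrite -(pair_big_dep (fun w => (w != v) && nbr_on adj A u w c)
   (fun w (j : 'I_K) => `[< overlap C s L w j u (g k) >]) (fun _ _ => 1%N)) /=.
apply: leq_trans (_ : ((\sum_(w | (w != v) && nbr_on adj A u w c) 3)%N <= _)%N).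
  apply: leq_sum => w _; rewrite sum1dep_card; apply: card3 => i j.
  rewrite !inE => hi hj.
  have H := frames_close hdrift hdelta hL hi hj; exact H.
rewrite sum_nat_cond_const mulnC leq_mul2l /=.
have hdeg : (deg adj A u c <= Dest)%N.
  apply: (leq_trans _ hDelta).
  rewrite /Delta (bigD1 u) //= leq_max; apply/orP; left.
  by rewrite (bigD1 c) //= leq_max leqnn.

have hv : nbr_on adj A u v c by rewrite /nbr_on adj_uv hcu hcv.
have hdeg' : (1 + #|finset.finset (fun w => nbr_on adj A u w c) :\ v| <= Dest)%N.
  have hvin : v \in finset.finset (fun w => nbr_on adj A u w c) by rewrite finset.in_set.
  by move: hdeg; rewrite edeg (cardsD1 v) hvin.
apply: (@leq_trans #|finset.finset (fun w => nbr_on adj A u w c) :\ v|).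
  apply: subset_leq_card; apply/fintype.subsetP => w; rewrite !inE.
  by case/andP => -> ->.
by rewrite -(leq_add2l 1) (subnKC hD).
Qed.

Lemma pp_true_le x c : pp x (c, true) <= 1 / (3 * Dest%:R).
Proof.
rewrite /pp /pchoice /=; case: ifP => _ /=; last first.
  by apply: divr_ge0 => //; apply: mulr_ge0 => //.
have ha := aw_pos x.1.
have hinv : 0 <= (#|A x.1|%:R : R)^-1 by rewrite invr_ge0 ltW.
apply: le_trans (ler_wpM2l hinv (ptx_le2 x.1)) _.
rewrite mulrA mulVf ?mul1r //; by rewrite lt0r_neq0.
Qed.

Lemma prodB_ge c : c \in Defs.span A v u ->
  (#|A v|%:R^-1 * ptx R A Dest v) * (#|A u|%:R^-1 * (1 - ptx R A Dest u)) * (1/4)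
  <= \prod_x \sum_(j in Bc c x) pp x j.
Proof.
move=> hc.
have hcu : c \in A u by move: hc; rewrite /Defs.span finset.in_setI => /andP[].
have hcv : c \in A v by move: hc; rewrite /Defs.span finset.in_setI => /andP[].
rewrite (bigD1 x0) //= (bigD1 x1) ?x10 //=.
rewrite {1 2}/Bc eqxx (negbTE x10) eqxx !big_set1 /pp /pchoice /= hcu hcv.
rewrite [X in _ <= X]mulrA; apply: ler_wpM2l.
  apply: mulr_ge0; apply: mulr_ge0.
  - by rewrite invr_ge0 ltW // aw_pos.
  - exact: ptx_ge0.
  - by rewrite invr_ge0 ltW // aw_pos.
  - have := ptx_le u; lra.
set b : R := 1 - 1 / (3 * Dest%:R).
have hD3 : 1 / (3 * Dest%:R) <= 1 / 3 :> R.
  rewrite ler_pdivrMr; last by apply: mulr_gt0 => //; apply: D_pos.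
  have := D_pos; have : 1 <= Dest%:R :> R by rewrite ler1n.
  lra.
have hD0 : 0 <= 1 / (3 * Dest%:R) :> R.
  by apply: divr_ge0 => //; apply: mulr_ge0 => //.
have b0 : 0 <= b by rewrite /b; lra.
have b1 : b <= 1 by rewrite /b; lra.
apply: le_trans (quarter R hD) _.
apply: le_trans (_ : b ^+ #|Ic c| <= _).
  exact: ler_wiXn2l (Ic_card hc).
rewrite -prodr_const.
have -> : \prod_(x in Ic c) b =
   \prod_(x | (true && (x != x0)) && (x != x1)) (if x \in Ic c then b else 1).
  rewrite big_mkcond [RHS]big_mkcond /=; apply: eq_bigr => x _.
  case hI: (x \in Ic c) => //; last by case: ifP.
  move: hI; rewrite inE => /and3P[h1 h2 _].
  have -> : x != x0 by apply/eqP => e; rewrite e eqxx in h1.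
  have -> : x != x1 by apply/eqP => e; move: h2; rewrite e /nbr_on hirr.
  by [].
apply: ler_prod => x /andP[/andP[_ hx0] hx1].
rewrite /Bc (negbTE hx0) (negbTE hx1).
case hI: (x \in Ic c).
- rewrite (sumC1 pp_sum1); have := pp_true_le x c; rewrite /b; lra.
- rewrite (eq_bigl (fun _ => true)); last by move=> j; rewrite finset.in_setT.
  by rewrite pp_sum1 lexx ler01.
Qed.

Lemma Pk_ge :
  rho R adj A / (8 * (maxn (2 * Smax A) (3 * Dest))%:R) <=
  \sum_om W pp om * (`[< covers adj A C s L om v (f k) u (g k) >])%:R.
Proof.
set X := (#|A v|%:R^-1 * ptx R A Dest v).
set Y := (#|A u|%:R^-1 * (1 - ptx R A Dest u)).
apply: le_trans (_ : \sum_(c in Defs.span A v u) (X * Y * (1/4)) <= _).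
  set m := (maxn (2 * Smax A) (3 * Dest))%:R : R.
  have hm1 : 2 * #|A v|%:R <= m.
    rewrite /m -natrM ler_nat; apply: leq_trans (leq_maxl _ _).
    by apply: leq_mul => //; rewrite /Smax (bigD1 v) //= leq_max leqnn.
  have hm2 : 3 * Dest%:R <= m.
    by rewrite /m -natrM ler_nat; apply: leq_maxr.
  have D0 := D_pos.
  have m0 : 0 < m by lra.
  have av := aw_pos v.
  have au := aw_pos u.
  have hX : 1 / m <= X.
    rewrite /X ler_pdivlMl // /ptx le_min; apply/andP; split.
      rewrite mulrA mulr1 ler_pdivrMr //; lra.
    rewrite mulrA mulr1; apply: ler_wpM2l; first exact: ltW.
    by rewrite lef_pV2 ?posrE //; apply: mulr_gt0.
  have hY : 1 / 2 <= 1 - ptx R A Dest u by have := ptx_le u; lra.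
  have hr := rho_le; have r0 := rho_pos.
  rewrite /span_ratio in hr.
  rewrite sumr_const -(mulr_natr (X * Y * (1/4))).
  set sp := (#|Defs.span A v u|%:R : R) in hr *.
  have e1 : X * Y * (1/4) * sp = (sp / #|A u|%:R) * X * (1 - ptx R A Dest u) * (1/4).
    by rewrite /Y; ring.
  have e2 : rho R adj A / (8 * m) = rho R adj A * (1 / m) * (1 / 2) * (1/4).
    by field; lra.
  rewrite e1 e2; apply: ler_wpM2r; first lra.
  have m1 : 0 <= 1 / m by apply: divr_ge0 => //; apply: ltW.
  apply: ler_pM.
  - by apply: mulr_ge0 => //; apply: ltW.
  - lra.
  - by apply: ler_pM => //; apply: ltW.
  - exact: hY.
apply: le_trans (_ : \sum_(c in Defs.span A v u) \prod_x \sum_(j in Bc c x) pp x j <= _).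
  by apply: ler_sum => c hc; apply: prodB_ge.
under eq_bigr => c _ do rewrite -(sum_W_prodB pp (Bc c)).
rewrite exchange_big /=.
apply: ler_sum => om _; rewrite -big_distrr /=.
by apply: ler_wpM2l; [apply: W_ge0; apply: pp_ge0 | apply: ind_le].
Qed.

End Pair.

Section Final.
Variable eps : R.
Hypotheses (heps : 0 < eps < 1)
  (hMb : 8 * (maxn (2 * Smax A) (3 * Dest))%:R / rho R adj A
      * ln (#|V|%:R ^+ 2 / eps) <= M%:R).

Lemma seq_ind (om : FF) :
  (`[< ~ seq_covers adj A C s L om v u M f g >])%:R = \prod_(k < M) phik k om.
Proof.
rewrite asbool_neg; case: asboolP => [[k [hk hc]]|h] /=.
  rewrite (bigD1 (Ordinal hk)) //= /phik /= (asboolT hc) /= mul0r //.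
rewrite big1 // => k _; rewrite /phik; case: asboolP => // hc.
by exfalso; apply: h; exists k; split.
Qed.

Lemma final :
  @Prob R V Ch A K Dest (fun om => ~ seq_covers adj A C s L om v u M f g)
    <= eps / #|V|%:R ^+ 2.
Proof.
rewrite Prob_eq.
set m := (maxn (2 * Smax A) (3 * Dest))%:R : R.
set q := rho R adj A / (8 * m).
have hm2 : 3 * Dest%:R <= m.
  by rewrite /m -natrM ler_nat; apply: leq_maxr.
have D0 := D_pos.
have m0 : 0 < m by lra.
have r0 := rho_pos.
have q0 : 0 < q by apply: divr_gt0 => //; lra.
under eq_bigr => om _ do rewrite seq_ind.
rewrite (indep_prod pp_sum1 (S := Sk) (phi := phik)); last 2 first.
- by move=> k _; apply: phik_dep.
- by move=> k k' x hk hk'; apply: Sk_dis.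
apply: le_trans (_ : \prod_(k < M) sequences.expR (- q) <= _).
  apply: ler_prod => k _; apply/andP; split.
    apply: sumr_ge0 => om _; apply: mulr_ge0; first exact: (W_ge0 pp_ge0).
    by rewrite /phik; case: (~~ _).
  have hP := Pk_ge (ltn_ord k).
  have hsum : \sum_om W pp om * phik k om +
      \sum_om W pp om * (`[< covers adj A C s L om v (f k) u (g k) >])%:R = 1.
    rewrite -big_split /= -[RHS](W_sum1 pp_sum1); apply: eq_bigr => om _.
    by rewrite /phik; case: (`[< _ >]); rewrite /= ?mulr0 ?mulr1 ?addr0 ?add0r.
  have := expR_ge1Dx (- q); rewrite -/q in hP; lra.
rewrite -(big_mkord xpredT (fun=> sequences.expR (- q))) prodr_const_nat subn0 -expRM_natl.
have N0 : (0 : R) < #|V|%:R by rewrite ltr0n; apply/card_gt0P; exists v.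
have y0 : 0 < #|V|%:R ^+ 2 / eps.
  by apply: divr_gt0; [apply: exprn_gt0 | case/andP: heps].
apply: le_trans (_ : sequences.expR (- ln (#|V|%:R ^+ 2 / eps)) <= _).
  rewrite ler_expR.
  have : ln (#|V|%:R ^+ 2 / eps) <= M%:R * q.
    have e : 8 * m / rho R adj A * ln (#|V|%:R ^+ 2 / eps) * q
             = ln (#|V|%:R ^+ 2 / eps).
      by rewrite /q; field; apply/andP; split; lra.
    rewrite -[X in X <= _]e; apply: ler_wpM2r; [exact: ltW | exact: hMb].
  lra.
by rewrite expRN lnK ?posrE // invf_div.
Qed.

End Final.

End Main.

Unset Implicit Arguments.
Theorem mainTheorem3 (R : realType) (V Ch : finType) (adj : rel V)
    (A : V -> {set Ch}) (Dest : nat) (delta L : R)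
    (C : V -> R -> R) (s : V -> R) (eps : R) (v u : V) (M K : nat)
    (f g : nat -> nat) :
  symmetric adj -> irreflexive adj ->
  (forall w : V, (0 < #|A w|)%N) ->
  (0 < Dest)%N -> (Delta adj A <= Dest)%N ->
  drift_bounded delta C -> delta <= 1 / 7 -> 0 < L ->
  0 < eps < 1 ->
  is_link adj A v u ->
  8 * (maxn (2 * Smax A) (3 * Dest))%:R / rho R adj A
      * ln (#|V|%:R ^+ 2 / eps) <= M%:R ->
  admissible C s L v u M f g ->
  window_ok C s L K u M f g ->
  @Prob R V Ch A K Dest (fun om => ~ seq_covers adj A C s L om v u M f g)
    <= eps / #|V|%:R ^+ 2.
Proof.
move=> _ hirr hA hD hDel hdr hde hL heps hlink hMb hadm hwin.
exact: (final hirr hA hD hDel hdr hde hL hlink hadm hwin heps hMb).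
Qed.
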